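(* Let $k$ be a positive integer with $3\mid k$. Then $S_3(k;3)\ge 3k-3$.
   Context: Let $k,r$ be positive integers with $r\mid k$. A solution to $\mathcal{E}$ is a $k$-tuple $(x_1,\dots,x_k)$ of positive integers (not necessarily distinct) with $\sum_{i=1}^{k-1}x_i=x_k$; it lies in $[1,n]$ if all $x_i\in\{1,\dots,n\}$. Given a coloring $\chi$ of $[1,n]$ with colors in $\{0,1,\dots,r-1\}$ (viewed as integers), a solution is $r$-zero-sum if $\sum_{i=1}^k\chi(x_i)\equiv 0\pmod r$. $S_3(k;r)$ denotes the least positive integer $n$ such that every coloring $\chi:[1,n]\to\{0,1,\dots,r-1\}$ admits an $r$-zero-sum solution to $\mathcal{E}$ in $[1,n]$. *)

(* Defs.v *)
From mathcomp Require Import all_boot.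
Set Implicit Arguments. Unset Strict Implicit. Unset Printing Implicit Defensive.

(* A solution to E : sum_{i=1}^{k-1} x_i = x_k, with k-tuple indexed by 'I_k
   (index i : 'I_k corresponds to x_{i+1}); it lies in [1,n] if all entries do. *)
Definition is_solution (k : nat) (x : 'I_k -> nat) : Prop :=
  \sum_(i < k | (i : nat) < k.-1) x i = \sum_(i < k | (i : nat) == k.-1) x i.

Definition in_interval (n k : nat) (x : 'I_k -> nat) : Prop :=
  forall i, 1 <= x i <= n.

Definition is_coloring (n r : nat) (chi : nat -> nat) : Prop :=
  forall m, 1 <= m <= n -> chi m < r.

Definition zero_sum (r k : nat) (chi : nat -> nat) (x : 'I_k -> nat) : Prop :=
  \sum_(i < k) chi (x i) = 0 %[mod r].

Definition S3_property (k r n : nat) : Prop :=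
  forall chi, is_coloring n r chi ->
    exists x : 'I_k -> nat,
      [/\ is_solution x, in_interval n x & zero_sum r chi x].

(* Main.v *)
Require Import Defs.
From mathcomp Require Import all_boot.
From mathcomp Require Import zify.

Definition ee (K x : nat) : nat :=
  if x < K then 0 else if x < 2 * K then (if 3 %| x then 2 else 0) else x + 2.

Definition chiK (K x : nat) : nat := (x + 1 + ee K x) %% 3.

Lemma narrow_sum (K : nat) (F : 'I_K.+1 -> nat) :
  \sum_(i < K.+1 | (i : nat) < K) F i = \sum_(i < K) F (widen_ord (leqnSn K) i).
Proof.
rewrite big_mkcond big_ord_recr /= ltnn addn0.
by apply: eq_bigr => i _; rewrite (ltn_ord i).
Qed.

Lemma last_sum (K : nat) (F : 'I_K.+1 -> nat) :
  \sum_(i < K.+1 | (i : nat) == K.+1.-1) F i = F ord_max.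
Proof.
rewrite (big_pred1 ord_max) // => i /=.
Qed.

Lemma two_bound (K : nat) (z : 'I_K -> nat) (i j : 'I_K) :
  (forall l, 1 <= z l) -> i != j ->
  z i + z j + K - 2 <= \sum_(l < K) z l.
Proof.
move=> hz hij.
have E : \sum_(l < K) z l = \sum_(l < K) (z l - 1) + K.
  rewrite -[in X in _ = _ + X](card_ord K) -sum1_card -big_split /=.
  by apply: eq_bigr => l _; have := hz l; lia.
rewrite E (bigD1 i) //= (bigD1 j) //=; last by rewrite eq_sym.
have := hz i; have := hz j; lia.
Qed.

Lemma one_bound (K : nat) (z : 'I_K -> nat) (i : 'I_K) :
  (forall l, 1 <= z l) -> z i + K - 1 <= \sum_(l < K) z l.
Proof.
move=> hz.
have E : \sum_(l < K) z l = \sum_(l < K) (z l - 1) + K.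
  rewrite -[in X in _ = _ + X](card_ord K) -sum1_card -big_split /=.
  by apply: eq_bigr => l _; have := hz l; lia.
rewrite E (bigD1 i) //=.
have := hz i; lia.
Qed.

Theorem theorem4 (k : nat) (hk : 0 < k) (h3 : 3 %| k) :
  forall n : nat, 0 < n -> S3_property k 3 n -> 3 * k - 3 <= n.
Proof.
move=> n hn HS.
case: k hk h3 HS => [//|K] _ h3 HS.
rewrite leqNgt; apply/negP => hlt.
have [x [hsol hint hzs]] : exists x : 'I_K.+1 -> nat,
    [/\ is_solution x, in_interval n x & zero_sum 3 (chiK K) x].
  apply: HS => m _; exact: ltn_pmod.
rewrite /is_solution narrow_sum last_sum in hsol.
set z := fun i : 'I_K => x (widen_ord (leqnSn K) i) in hsol.
set y := x ord_max in hsol.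
have hz : forall l, 1 <= z l by move=> l; case/andP: (hint (widen_ord (leqnSn K) l)).
have hy : y <= n by case/andP: (hint ord_max).
have K2 : 2 <= K by move: h3 hlt; clear; case: K => [|[|K]] //.
rewrite /zero_sum big_ord_recr /= -/y in hzs.
have S1 : (\sum_(i < K) chiK K (z i)) %% 3 = (\sum_(i < K) (z i + 1 + ee K (z i))) %% 3.
  rewrite -[LHS]modn_summ -[RHS]modn_summ; congr (_ %% 3); apply: eq_bigr => i _.
  by rewrite /chiK modn_mod.
rewrite !big_split /= hsol sum1_card card_ord in S1.
move: hzs S1; rewrite -/z /chiK.
set A := \sum_(i < K) _.
set E := \sum_(i < K) ee K (z i).
move=> hzs S1.
have hyK : K <= y by rewrite -hsol -[X in X <= _](card_ord K) -sum1_card; apply: leq_sum => i _; exact: hz.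
have zb : forall i, z i + K - 1 <= y by move=> i; rewrite -hsol; exact: one_bound.
have hK : 3 %| K.+1 := h3.
case: (ltnP y (2 * K)) => hy2.
- have E0 : E = 0.
    apply: big1 => i _; rewrite /ee.
    have := zb i => hzi.
    case: ltnP => // h1; rewrite ifT; last by lia.
    case: ifP => // d; exfalso; move: d hK; lia.
  move: hzs S1; rewrite E0 /ee ltnNge hyK /= hy2.
  case: ifP => d; move: d hK; lia.
- have Em : E %% 3 = 0 \/ E %% 3 = 2.
    have ez : forall i, ee K (z i) %% 3 != 0 -> K < z i /\ ee K (z i) %% 3 = 2.
      move=> i; have := zb i; rewrite /ee.
      case: ltnP => h1 hzi //.
      case: ltnP => h2.
        case: ifP => d; last by [].
        by move=> _; split=> //; move: d hK; lia.
      by move: hK; lia.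
    case: (boolP [exists i, ee K (z i) %% 3 != 0]).
    + case/existsP => i0 hi0; right.
      rewrite /E -modn_summ (bigD1 i0) //= big1 ?addn0.
        by case: (ez _ hi0) => _ ->.
      move=> j hj; apply/eqP; apply/negPn/negP => hj0.
      case: (ez _ hj0) => hj1 _; case: (ez _ hi0) => hi1 _.
      have hsz : \sum_(l < K) z l = y := hsol.
      have := @two_bound K z j i0 hz hj; rewrite hsz; lia.
    + move/existsPn => hall; left.
      rewrite /E -modn_summ big1 //; move=> i _; apply/eqP.
      by move: (hall i); rewrite negbK.
  move: hzs S1; rewrite /ee ltnNge hyK /= ltnNge hy2 /=.
  move: Em hK; lia.
Qed.
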